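(* Let $d\in\mathbb{N}$ and $K=\mathbb{N}_0^d$ or $K=\mathbb{Z}^d$. Let $(\Omega,\mathcal F,P)$ be a probability space and $(\theta_k)_{k\in K}$ a $d$-parameter semigroup (group, if $K=\mathbb{Z}^d$) of $P$-preserving transformations of $\Omega$. Let $(M,\mathcal B,\mu)$ be a probability space, $\tau:M\to M$ a $\mu$-preserving measurable transformation, and $\kappa:M\to K$ a $\mathcal B$-measurable function. Put $\kappa_n=\sum_{i=0}^{n-1}\kappa\circ\tau^i$ and let $S(t,\omega)=(\tau(t),\theta_{\kappa(t)}\omega)$ on $M\times\Omega$ with the product $\sigma$-algebra $\mathcal B\otimes\mathcal F$ and the product measure $\bar P=\mu\otimes P$. Consider the conditions: (C1) for $\mu$-almost all $t\in M$, $(\theta_k)_{k\in K}$ is weakly mixing along the sequence $(\kappa_n(t))_{n\in\mathbb{N}}$; (C2) $(\theta_k)_{k\in K}$ is strongly mixing with respect to $P$, and for $\mu$-almost all $t\in M$, $\|\kappa_n(t)\|\to\infty$ as $n\to\infty$. Then: (i) If (C1) holds and $\tau$ is ergodic w.r.t. $\mu$, then $S$ is ergodic w.r.t. $\bar P$. (ii) If (C1) holds and $\tau$ is weakly mixing w.r.t. $\mu$, then $S$ is weakly mixing w.r.t. $\bar P$. (iii) If (C2) holds and $\tau$ is strongly mixing w.r.t. $\mu$, then $S$ is strongly mixing w.r.t. $\bar P$.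
   Context: A $d$-parameter semigroup of measure-preserving transformations means: each $\theta_k$ is measurable and preserves $P$, $\theta_0=\mathrm{Id}$ and $\theta_k\circ\theta_l=\theta_{k+l}$ for all $k,l\in K$; for $K=\mathbb{Z}^d$ (group) additionally $\theta_{-k}=\theta_k^{-1}$. $\|\cdot\|$ is the maximum norm on $\mathbb{Z}^d$. One has $S^n(t,\omega)=(\tau^n(t),\theta_{\kappa_n(t)}\omega)$. For a $K$-valued sequence $(k_n)_{n\in\mathbb{N}}$, $(\theta_k)_{k\in K}$ is called weakly mixing along $(k_n)$ w.r.t. $P$ if $\frac1n\sum_{i=0}^{n-1}|P(A\cap\theta_{k_i}^{-1}B)-P(A)P(B)|\to0$ as $n\to\infty$ for all $A,B\in\mathcal F$. $(\theta_k)_{k\in K}$ is strongly mixing w.r.t. $P$ if $P(A\cap\theta_k^{-1}B)\to P(A)P(B)$ as $\|k\|\to\infty$ for all $A,B\in\mathcal F$. *)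

(* Defs.v *)
From HB Require Import structures.
From mathcomp Require Import all_boot all_order all_algebra.
From mathcomp Require Import all_classical all_reals all_analysis.
Set Implicit Arguments. Unset Strict Implicit. Unset Printing Implicit Defensive.
Import Order.TTheory GRing.Theory Num.Theory.
Import numFieldNormedType.Exports.
Local Open Scope classical_set_scope.
Local Open Scope ring_scope.

Inductive param := ParN | ParZ.

Definition Kt (p : param) (d : nat) : nmodType :=
  match p with
  | ParN => {ffun 'I_d -> nat}
  | ParZ => {ffun 'I_d -> int}
  end.

Definition knorm (p : param) (d : nat) : Kt p d -> nat :=
  match p with
  | ParN => fun k => (\max_(i < d) (k : {ffun 'I_d -> nat}) i)%N
  | ParZ => fun k => (\max_(i < d) `|(k : {ffun 'I_d -> int}) i|%N)%N
  end.

(* d-parameter semigroup of P-preserving transformations; for K = Z^d the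
   group property theta_{-k} = theta_k^{-1} follows from the semigroup law
   (theta_k o theta_{-k} = theta_0 = Id). *)
Definition measure_preserving d (T : measurableType d) (R : realType)
    (Q : probability T R) (f : T -> T) :=
  measurable_fun setT f /\
  forall A, measurable A -> Q (f @^-1` A) = Q A.

Definition mp_semigroup (K : nmodType) d (T : measurableType d) (R : realType)
    (Q : probability T R) (theta : K -> T -> T) :=
  (forall k, measure_preserving Q (theta k)) /\
  theta 0 = id /\
  (forall k l, theta k \o theta l = theta (k + l)).

Definition ergodic d (T : measurableType d) (R : realType)
    (Q : probability T R) (f : T -> T) :=
  forall A, measurable A -> f @^-1` A = A -> Q A = 0%E \/ Q A = 1%E.

Definition cesaro_dev d (T : measurableType d) (R : realType)
    (Q : probability T R) (g : nat -> T -> T) (A B : set T) (n : nat) : R :=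
  n%:R^-1 * \sum_(i < n)
     `| fine (Q (A `&` g i @^-1` B)) - fine (Q A) * fine (Q B) |.

Definition weakly_mixing d (T : measurableType d) (R : realType)
    (Q : probability T R) (f : T -> T) :=
  forall A B, measurable A -> measurable B ->
    cesaro_dev Q (fun i => iter i f) A B @ \oo --> (0 : R).

Definition strongly_mixing d (T : measurableType d) (R : realType)
    (Q : probability T R) (f : T -> T) :=
  forall A B, measurable A -> measurable B ->
    (fun n => fine (Q (A `&` iter n f @^-1` B))) @ \oo
      --> fine (Q A) * fine (Q B).

Definition weakly_mixing_along (K : Type) d (T : measurableType d)
    (R : realType) (Q : probability T R) (theta : K -> T -> T)
    (ks : nat -> K) :=
  forall A B, measurable A -> measurable B ->
    cesaro_dev Q (fun i => theta (ks i)) A B @ \oo --> (0 : R).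

Definition strongly_mixing_family (K : Type) (norm : K -> nat) d
    (T : measurableType d) (R : realType) (Q : probability T R)
    (theta : K -> T -> T) :=
  forall A B, measurable A -> measurable B ->
  forall eps : R, 0 < eps -> exists N : nat, forall k, (N <= norm k)%N ->
    `| fine (Q (A `&` theta k @^-1` B)) - fine (Q A) * fine (Q B) | < eps.

Definition measurable_discrete d (M : measurableType d) (K : Type)
    (kappa : M -> K) :=
  forall A : set K, measurable (kappa @^-1` A).

Definition kappa_n (K : nmodType) (M : Type) (tau : M -> M) (kappa : M -> K)
    (n : nat) (t : M) : K :=
  \sum_(i < n) kappa (iter i tau t).

Definition skew_product (K : Type) (M W : Type) (tau : M -> M) (kappa : M -> K)
    (theta : K -> W -> W) (x : M * W) : M * W :=
  (tau x.1, theta (kappa x.1) x.2).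

(* Main.v *)
Require Import Defs.
From HB Require Import structures.
From mathcomp Require Import all_boot all_order all_algebra.
From mathcomp Require Import all_classical all_reals all_analysis.
From mathcomp Require Import measurable_realfun.
From mathcomp Require Import ring lra.
Import Order.TTheory GRing.Theory Num.Theory.
Import numFieldNormedType.Exports.
Local Open Scope classical_set_scope.
Local Open Scope ring_scope.
Set Implicit Arguments. Unset Strict Implicit. Unset Printing Implicit Defensive.
Section Phi.
Variable R : realType.
Definition wavg (w : nat -> nat -> R) (u : nat -> R) n :=
  \sum_(i < n.+1) w n i * u i.
Definition good_w (w : nat -> nat -> R) :=
  (forall n i, 0 <= w n i) /\ (forall n, \sum_(i < n.+1) w n i <= 1).
Definition Phi w (u : nat -> R) := forall e, 0 < e ->
  exists N, forall n, (N <= n)%N -> wavg w (fun i => `|u i|) n <= e.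

Section gw.
Variable w : nat -> nat -> R.
Hypothesis hw : good_w w.

Lemma wavg_le u v n : (forall i, u i <= v i) -> wavg w u n <= wavg w v n.
Proof. move=> h; apply: ler_sum => i _; apply: ler_wpM2l; [exact: hw.1|exact: h]. Qed.

Lemma wavgD u v n : wavg w (fun i => u i + v i) n = wavg w u n + wavg w v n.
Proof. by rewrite /wavg -big_split /=; apply: eq_bigr => i _; rewrite mulrDr. Qed.

Lemma wavg_cst c n : 0 <= c -> wavg w (fun=> c) n <= c.
Proof.
move=> c0; rewrite /wavg -big_distrl /= -[leRHS]mul1r; apply: ler_wpM2r => //.
exact: hw.2.
Qed.

Lemma wavg_ge0 u n : (forall i, 0 <= u i) -> 0 <= wavg w u n.
Proof. by move=> h; apply: sumr_ge0 => i _; apply: mulr_ge0 => //; exact: hw.1. Qed.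

Lemma Phi_le u v : (forall i, `|u i| <= `|v i|) -> Phi w v -> Phi w u.
Proof.
move=> h pv e e0; have [N HN] := pv e e0; exists N => n /HN; apply: le_trans.
exact: wavg_le.
Qed.

Lemma Phi_sum u v : Phi w u -> Phi w v -> Phi w (fun i => `|u i| + `|v i|).
Proof.
move=> pu pv e e0; have e20 : 0 < e / 2 by rewrite divr_gt0.
have [N1 H1] := pu _ e20; have [N2 H2] := pv _ e20.
exists (maxn N1 N2) => n hn.
have h1 := H1 n (leq_trans (leq_maxl _ _) hn).
have h2 := H2 n (leq_trans (leq_maxr _ _) hn).
have -> : (fun i => `| `|u i| + `|v i| |) = (fun i => `|u i| + `|v i|).
  by apply/funext => i; rewrite ger0_norm // addr_ge0.
by rewrite wavgD; apply: le_trans (lerD h1 h2) _; rewrite -splitr.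
Qed.

Lemma Phi_approx u : (forall d, 0 < d -> exists v, Phi w v /\
  forall i, `|u i| <= `|v i| + d) -> Phi w u.
Proof.
move=> h e e0; have e20 : 0 < e / 2 by rewrite divr_gt0.
have [v [pv hv]] := h _ e20; have [N HN] := pv _ e20.
exists N => n hn; apply: le_trans (wavg_le n hv) _.
rewrite wavgD; have hc : wavg w (fun=> e / 2) n <= e / 2 by apply: wavg_cst => //; exact: ltW.
apply: le_trans (lerD (HN n hn) hc) _.
by rewrite -splitr.
Qed.

End gw.

Definition wlim : nat -> nat -> R := fun n i => (i == n)%:R.
Definition wces : nat -> nat -> R := fun n i => (i < n)%:R / n%:R.

Lemma wavg_lim u n : wavg wlim u n = u n.
Proof.
rewrite /wavg big_ord_recr /= big1 ?add0r /wlim ?eqxx ?mul1r // => i _.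
by rewrite /wlim (ltn_eqF (ltn_ord i)) mul0r.
Qed.

Lemma wavg_ces u n : wavg wces u n = n%:R^-1 * \sum_(i < n) u i.
Proof.
rewrite /wavg big_ord_recr /= /wces ltnn mul0r mul0r addr0 big_distrr /=.
by apply: eq_bigr => i _; rewrite ltn_ord mul1r mulrC.
Qed.

Lemma good_wlim : good_w wlim.
Proof.
split => [n i|n]; first by rewrite /wlim ler0n.
have := wavg_lim (fun=> 1) n; rewrite /wavg => h.
by under eq_bigr do rewrite -[wlim _ _]mulr1; rewrite h.
Qed.

Lemma good_wces : good_w wces.
Proof.
split => [n i|n]; first by rewrite /wces divr_ge0.
have := wavg_ces (fun=> 1) n; rewrite /wavg => h.
under eq_bigr do rewrite -[wces _ _]mulr1; rewrite h.
rewrite sumr_const card_ord; case: n {h} => [|n]; first by rewrite invr0 mul0r.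
by rewrite -[_ *+ _]mulr_natl mulr1 mulVf.
Qed.

Lemma cvg0P (s : nat -> R) : s @ \oo --> 0 <->
  forall e, 0 < e -> exists N, forall n, (N <= n)%N -> `|s n| <= e.
Proof.
split.
  move=> /cvgrPdist_le h e e0; have [N _ HN] := h e e0.
  by exists N => n hn; have := HN n hn; rewrite sub0r normrN.
move=> h; apply/cvgrPdist_le => e e0; have [N HN] := h e e0.
by exists N => // n hn; rewrite sub0r normrN; exact: HN.
Qed.

Lemma Phi_limP (u : nat -> R) l : Phi wlim (fun n => u n - l) <-> u @ \oo --> l.
Proof.
split.
  move=> h; apply/cvgrPdist_le => e e0; have [N HN] := h e e0.
  by exists N => // n /HN; rewrite wavg_lim distrC.
move=> /cvgrPdist_le h e e0; have [N _ HN] := h e e0.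
by exists N => n /HN; rewrite wavg_lim distrC.
Qed.

Lemma Phi_cesP (u : nat -> R) : Phi wces u <->
  (fun n => n%:R^-1 * \sum_(i < n) `|u i|) @ \oo --> 0.
Proof.
have ge0 n : 0 <= n%:R^-1 * \sum_(i < n) `|u i| by rewrite mulr_ge0 // sumr_ge0.
split.
  move=> h; apply/cvg0P => e e0; have [N HN] := h e e0.
  by exists N => n /HN; rewrite wavg_ces ger0_norm.
move=> /cvg0P h e e0; have [N HN] := h e e0.
by exists N => n /HN; rewrite wavg_ces ger0_norm.
Qed.

End Phi.
Section probR.
Context (R : realType) d (T : measurableType d) (Q : probability T R).
Lemma finQ E : measurable E -> Q E \is a fin_num.
Proof. by move=> mE; rewrite fin_num_measure. Qed.
Lemma fineQK E : measurable E -> (fine (Q E))%:E = Q E.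
Proof. by move=> mE; rewrite fineK // finQ. Qed.
Lemma fineQ_ge0 E : 0 <= fine (Q E).
Proof. by rewrite fine_ge0 // measure_ge0. Qed.
Lemma fineQ_le1 E : measurable E -> fine (Q E) <= 1.
Proof. by move=> mE; rewrite -lee_fin fineQK // probability_le1. Qed.
Lemma fineQT : fine (Q setT) = 1.
Proof. by rewrite probability_setT. Qed.
Lemma fineQD E F : measurable E -> measurable F -> F `<=` E ->
  fine (Q (E `\` F)) = fine (Q E) - fine (Q F).
Proof.
move=> mE mF FE; rewrite measureD //; last by rewrite -ge0_fin_numE ?finQ.
by rewrite setIidr // fineB // ?finQ // measurableD.
Qed.
Lemma fineQ_le E F : measurable F -> E `<=` F -> measurable E -> fine (Q E) <= fine (Q F).
Proof. by move=> mF EF mE; rewrite -lee_fin !fineQK // le_measure // inE. Qed.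
End probR.

Section lambda.
Context (R : realType) d1 d2 (T1 : measurableType d1) (T2 : measurableType d2).
Variable Q : probability (T1 * T2)%type R.
Variable w : nat -> nat -> R.
Hypothesis hw : good_w w.
Variable X : set (T1 * T2)%type -> nat -> R.
Variable c : R.
Hypothesis c0 : 0 <= c.
Hypothesis Xbound : forall E, measurable E -> forall n, `|X E n| <= c * fine (Q E).
Hypothesis XD : forall E F, measurable E -> measurable F -> F `<=` E ->
  forall n, X (E `\` F) n = X E n - X F n.
Hypothesis Xrect : forall A B, measurable A -> measurable B -> Phi w (X (A `*` B)).

Lemma lambda_Phi E : measurable E -> Phi w (X E).
Proof.
pose H := [set E | measurable E /\ Phi w (X E)].
pose G := [set A `*` B | A in @measurable _ T1 & B in @measurable _ T2].
have GI : setI_closed G.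
  move=> /= _ _ [X1 mX1 [X2 mX2 <-]] [Y1 mY1 [Y2 mY2 <-]].
  rewrite -setXI; exists (X1 `&` Y1); first exact: measurableI.
  by exists (X2 `&` Y2) => //; exact: measurableI.
have GH : G `<=` H.
  move=> _ [A mA [B mB <-]]; split; [exact: measurableX|exact: Xrect].
have lH : lambda_system setT H.
  split.
  - by [].
  - by split; [exact: measurableT|rewrite -setXTT; exact: Xrect].
  - move=> A B BA [mA pA] [mB pB]; split; first exact: measurableD.
    have hle i : `|X (A `\` B) i| <= `| `|X A i| + `|X B i| |.
      by rewrite XD // [X in _ <= X]ger0_norm ?addr_ge0 //; exact: ler_normB.
    exact: (Phi_le hw hle (Phi_sum pA pB)).
  - move=> F ndF HF; have mF n := (HF n).1.
    have mU : measurable (\bigcup_n F n) by exact: bigcupT_measurable.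
    split => //; apply: (Phi_approx hw) => dl dl0.
    have hc : 0 < dl / (c + 1) by rewrite divr_gt0 // ltr_wpDl.
    have : (fine \o (Q \o F)) n @[n --> \oo] --> fine (Q (\bigcup_n F n)).
      by apply: fine_cvg; rewrite fineQK //; exact: nondecreasing_cvg_mu.
    move=> /cvgrPdist_le /(_ _ hc) [N _ HN].
    have {}HN := HN N (leqnn N).
    exists (X (F N)); split; first exact: (HF N).2.
    move=> i.
    have -> : X (\bigcup_n F n) i = X (\bigcup_n F n `\` F N) i + X (F N) i.
      rewrite XD //; first by rewrite subrK.
      by move=> x FNx; exists N.
    rewrite addrC; apply: le_trans (ler_normD _ _) _; rewrite lerD2l.
    apply: le_trans (Xbound (measurableD mU (mF N)) i) _.
    rewrite fineQD //; last by move=> x FNx; exists N.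
    have h1 : fine (Q (\bigcup_n F n)) - fine (Q (F N)) <= dl / (c + 1).
      by apply: le_trans HN; rewrite /= ler_norm.
    apply: le_trans (ler_wpM2l c0 h1) _.
    by rewrite mulrA ler_pdivrMr ?ltr_wpDl // mulrC ler_wpM2l ?ltW // ltrDl.
move=> mE; have h := lambda_system_subset GI lH GH.
have h2 : <<s G >> E by rewrite -measurable_prod_measurableType.
exact: (h (fun _ _ => @subsetT _ _) E h2).2.
Qed.

End lambda.
Section skew.
Context (R : realType) (K : nmodType) (hK : countable [set: K]).
Context (dO : measure_display) (Omega : measurableType dO) (P : probability Omega R).
Context (theta : K -> Omega -> Omega).
Context (dM : measure_display) (M : measurableType dM) (mu : probability M R).
Context (tau : M -> M) (kappa : M -> K).
Hypothesis hth : mp_semigroup P theta.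
Hypothesis htau : measure_preserving mu tau.
Hypothesis hka : measurable_discrete kappa.

Local Notation kn := (kappa_n tau kappa).
Definition Sn n (x : M * Omega) : M * Omega := (iter n tau x.1, theta (kn n x.1) x.2).

Lemma kn0 t : kn 0 t = 0.
Proof. by rewrite /kappa_n big_ord0. Qed.

Lemma knS n t : kn n.+1 t = kn n t + kappa (iter n tau t).
Proof. by rewrite /kappa_n big_ord_recr. Qed.

Lemma iterSk n : iter n (skew_product tau kappa theta) = Sn n.
Proof.
have [_ [th0 thM]] := hth.
elim: n => [|n IH]; apply/funext => -[t w].
  by rewrite /Sn /= kn0 th0.
rewrite iterS IH /Sn /skew_product /= knS addrC.
by rewrite -(thM (kappa (iter n tau t)) (kn n t)).
Qed.

Lemma th_meas k : measurable_fun setT (theta k).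
Proof. by case: hth => /(_ k) [] . Qed.

Lemma th_pres k A : measurable A -> P (theta k @^-1` A) = P A.
Proof. by case: hth => /(_ k) [] _ h _; exact: h. Qed.

Lemma iter_meas n : measurable_fun setT (iter n tau).
Proof.
elim: n => [|n IH]; first exact: measurable_id.
by rewrite /=; apply: measurableT_comp => //; case: htau.
Qed.

Lemma iter_pres n A : measurable A -> mu (iter n tau @^-1` A) = mu A.
Proof.
elim: n A => [//|n IH] A mA.
have -> : iter n.+1 tau @^-1` A = iter n tau @^-1` (tau @^-1` A) by [].
rewrite IH; first by case: htau => _ ->.
by case: htau => mt _; rewrite -[X in measurable X]setTI; exact: mt.
Qed.

Lemma iter_mp n : measure_preserving mu (iter n tau).
Proof. by split; [exact: iter_meas|exact: iter_pres]. Qed.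

Lemma pre_meas (f : M -> M) A : measurable_fun setT f -> measurable A ->
  measurable (f @^-1` A).
Proof. by move=> mf mA; rewrite -[X in measurable X]setTI; exact: mf. Qed.

Lemma disc_add (f g : M -> K) : measurable_discrete f -> measurable_discrete g ->
  measurable_discrete (fun t => f t + g t).
Proof.
move=> mf mg A.
have -> : (fun t => f t + g t) @^-1` A =
    \bigcup_k (f @^-1` [set k] `&` g @^-1` [set l | A (k + l)]).
  apply/seteqP; split => [t /= At|t [k _ [/= <- //]]].
  by exists (f t) => //.
apply: countable_bigcupT_measurable => // k; exact: measurableI.
Qed.

Lemma kn_meas n : measurable_discrete (kn n).
Proof.
elim: n => [|n IH] A.
  have -> : kn 0 @^-1` A = if pselect (A 0) is left _ then setT else set0.
    apply/seteqP; split => t; rewrite /= kn0; case: pselect => //.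
  by case: pselect.
have -> : kn n.+1 @^-1` A = (fun t => kn n t + kappa (iter n tau t)) @^-1` A.
  by apply/seteqP; split => t; rewrite /= knS.
apply: disc_add => // B; exact: pre_meas (iter_meas n) (hka B).
Qed.

Lemma Sn_meas n : measurable_fun setT (Sn n).
Proof.
apply: measurable_fun_pair.
  by apply: measurableT_comp; [exact: iter_meas|exact: measurable_fst].
move=> _ D mD; rewrite setTI.
have -> : (fun x : M * Omega => theta (kn n x.1) x.2) @^-1` D =
    \bigcup_k ((kn n @^-1` [set k]) `*` (theta k @^-1` D)).
  apply/seteqP; split => [[t w] /= Dw|[t w] [k _ [/= <- //]]].
  by exists (kn n t).
apply: countable_bigcupT_measurable => // k; apply: measurableX.
  exact: kn_meas.
by rewrite -[X in measurable X]setTI; exact: th_meas.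
Qed.

Lemma Sn_pre_meas n B : measurable B -> measurable (Sn n @^-1` B).
Proof. by move=> mB; rewrite -[X in measurable X]setTI; exact: Sn_meas. Qed.

Lemma sec_S n A B t : xsection (A `&` Sn n @^-1` B) t =
  xsection A t `&` theta (kn n t) @^-1` (xsection B (iter n tau t)).
Proof. by apply/seteqP; split => y; rewrite /xsection /= !inE. Qed.

Lemma secS n B t : xsection (Sn n @^-1` B) t =
  theta (kn n t) @^-1` (xsection B (iter n tau t)).
Proof. by apply/seteqP; split => y; rewrite /xsection /= !inE. Qed.

Local Notation MO := (M * Omega)%type.
Local Notation PO E := (fine (P E)).
Local Notation PM E := (fine (mu E)).
Local Notation PB E := (fine ((mu \x P)%E E)).

Lemma secf_meas (E : set MO) : measurable E -> measurable_fun setT (fun t => PO (xsection E t)).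
Proof.
move=> mE; have h := measurable_fun_xsection P mE.
change (measurable_fun setT (fine \o (P \o xsection E))).
have hf : measurable_fun [set: \bar R] (@fine R) by [].
exact: (measurableT_comp hf h).
Qed.

Lemma int_bd (f : M -> R) c : measurable_fun setT f -> (forall t, `|f t| <= c) ->
  mu.-integrable setT (EFin \o f).
Proof.
move=> mf hf; apply: (le_integrable measurableT _ _ (finite_measure_integrable_cst mu c measurableT)).
- exact/measurable_EFinP.
- move=> t _ /=; rewrite lee_fin (ger0_norm (le_trans (normr_ge0 _) (hf t))).
  exact: hf.
Qed.

Lemma PB_int (E : set MO) : measurable E -> PB E = \int[mu]_t PO (xsection E t).
Proof.
move=> mE; rewrite /product_measure1 /Rintegral; congr fine.
by apply: eq_integral => t _; rewrite /= fineQK //; exact: measurable_xsection.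
Qed.

Lemma comp_int (g : M -> M) (f : M -> R) : measure_preserving mu g ->
  measurable_fun setT f -> (forall t, 0 <= f t) ->
  \int[mu]_t f (g t) = \int[mu]_t f t.
Proof.
move=> [mg pg] mf f0; rewrite /Rintegral; congr fine.
have := ge0_integral_pushforward mg mu (D := setT) (f := EFin \o f) measurableT.
rewrite preimage_setT => <- //.
- apply: eq_measure_integral => A mA _; exact: pg.
- exact/measurable_EFinP.
- by move=> y _; rewrite lee_fin.
Qed.

Lemma PB_pres n (B : set MO) : measurable B -> PB (Sn n @^-1` B) = PB B.
Proof.
move=> mB; rewrite !PB_int //; last exact: Sn_pre_meas.
rewrite -(comp_int (iter_mp n) (secf_meas mB)); last by move=> t; exact: fineQ_ge0.
apply: eq_Rintegral => t _; rewrite secS th_pres //.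
exact: measurable_xsection.
Qed.



Local Notation Pb := ((mu \x P)%E).

Definition xdev n (A B : set MO) := PB (A `&` Sn n @^-1` B) - PB A * PB B.
Definition Zt n (A B : set MO) :=
  \int[mu]_t (PO (xsection A t) * PO (xsection B (iter n tau t))).
Definition ydev n (A B : set MO) := PB (A `&` Sn n @^-1` B) - Zt n A B.

Lemma PB_ge0 (E : set MO) : 0 <= PB E. Proof. exact: fineQ_ge0. Qed.
Lemma PB_le1 (E : set MO) : measurable E -> PB E <= 1. Proof. exact: fineQ_le1. Qed.
Lemma PO_ge0 (E : set Omega) : 0 <= PO E. Proof. exact: fineQ_ge0. Qed.
Lemma PO_le1 (E : set Omega) : measurable E -> PO E <= 1. Proof. exact: fineQ_le1. Qed.

Lemma preI_meas n (A B : set MO) : measurable A -> measurable B ->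
  measurable (A `&` Sn n @^-1` B).
Proof. by move=> mA mB; apply: measurableI => //; exact: Sn_pre_meas. Qed.

Lemma preD n (A B B' : set MO) : A `&` Sn n @^-1` (B `\` B') =
  (A `&` Sn n @^-1` B) `\` (A `&` Sn n @^-1` B').
Proof.
apply/seteqP; split => x /=.
  by move=> [Ax [Bx nB']]; split => // -[].
by move=> [[Ax Bx] h]; split => //; split => // B'x; apply: h.
Qed.

Lemma preD' n (A A' B : set MO) : (A `\` A') `&` Sn n @^-1` B =
  (A `&` Sn n @^-1` B) `\` (A' `&` Sn n @^-1` B).
Proof.
apply/seteqP; split => x /=.
  by move=> [[Ax nA'] Bx]; split => // -[].
by move=> [[Ax Bx] h]; split => //; split => // A'x; apply: h.
Qed.

Lemma xD_B n (A B B' : set MO) : measurable A -> measurable B -> measurable B' ->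
  B' `<=` B -> xdev n A (B `\` B') = xdev n A B - xdev n A B'.
Proof.
move=> mA mB mB' sub; rewrite /xdev preD fineQD //; try exact: preI_meas.
  by rewrite (fineQD _ mB mB' sub); ring.
by move=> x [Ax Bx]; split => //; exact: sub.
Qed.

Lemma xD_A n (A A' B : set MO) : measurable A -> measurable A' -> measurable B ->
  A' `<=` A -> xdev n (A `\` A') B = xdev n A B - xdev n A' B.
Proof.
move=> mA mA' mB sub; rewrite /xdev preD' fineQD //; try exact: preI_meas.
  by rewrite (fineQD _ mA mA' sub); ring.
by move=> x [Ax Bx]; split => //; exact: sub.
Qed.

Lemma norm_sub_le (a b c : R) : 0 <= a <= c -> 0 <= b <= c -> `|a - b| <= c.
Proof.
move=> /andP[a0 ac] /andP[b0 bc]; rewrite ler_norml; apply/andP; split; lra.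
Qed.

Lemma xbound_B n (A B : set MO) : measurable A -> measurable B ->
  `|xdev n A B| <= 1 * PB B.
Proof.
move=> mA mB; rewrite mul1r.
have h1 : PB (A `&` Sn n @^-1` B) <= PB B.
  rewrite -(PB_pres n mB); apply: fineQ_le; [exact: Sn_pre_meas| |exact: preI_meas].
  by move=> x [].
have h2 : PB A * PB B <= PB B by rewrite ler_piMl ?PB_ge0 ?PB_le1.
have h3 : 0 <= PB A * PB B by apply: mulr_ge0; exact: PB_ge0.
by rewrite /xdev; apply: norm_sub_le; rewrite ?h1 ?h2 ?h3 ?PB_ge0.
Qed.

Lemma xbound_A n (A B : set MO) : measurable A -> measurable B ->
  `|xdev n A B| <= 1 * PB A.
Proof.
move=> mA mB; rewrite mul1r.
have h1 : PB (A `&` Sn n @^-1` B) <= PB A.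
  by apply: fineQ_le => //; last exact: preI_meas.
have h2 : PB A * PB B <= PB A by rewrite ler_piMr ?PB_ge0 ?PB_le1.
have h3 : 0 <= PB A * PB B by apply: mulr_ge0; exact: PB_ge0.
by rewrite /xdev; apply: norm_sub_le; rewrite ?h1 ?h2 ?h3 ?PB_ge0.
Qed.

Lemma secI_meas n (B : set MO) : measurable B ->
  measurable_fun setT (fun t => PO (xsection B (iter n tau t))).
Proof.
move=> mB; change (measurable_fun setT ((fun t => PO (xsection B t)) \o iter n tau)).
by apply: measurableT_comp; [exact: secf_meas|exact: iter_meas].
Qed.

Lemma xsecD (B B' : set MO) s : measurable B -> measurable B' -> B' `<=` B ->
  PO (xsection (B `\` B') s) = PO (xsection B s) - PO (xsection B' s).
Proof.
move=> mB mB' sub; rewrite xsectionD fineQD //; try exact: measurable_xsection.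
by move=> y; rewrite /xsection /= !inE; exact: sub.
Qed.

Lemma int_bd1 (f : M -> R) : measurable_fun setT f -> (forall t, `|f t| <= 1) ->
  mu.-integrable setT (EFin \o f).
Proof. exact: int_bd. Qed.

Lemma normPO_le1 (E : set Omega) : measurable E -> `|PO E| <= 1.
Proof. by move=> mE; rewrite ger0_norm ?PO_ge0 ?PO_le1. Qed.

Lemma Zt_int n (A B : set MO) : measurable A -> measurable B ->
  mu.-integrable setT (EFin \o (fun t => PO (xsection A t) * PO (xsection B (iter n tau t)))).
Proof.
move=> mA mB; apply: int_bd1.
  by apply: measurable_funM; [exact: secf_meas|exact: secI_meas].
move=> t; rewrite normrM -[1]mulr1; apply: ler_pM => //;
  exact: normPO_le1 (measurable_xsection _ _).
Qed.

Lemma ZD n (A B B' : set MO) : measurable A -> measurable B -> measurable B' ->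
  B' `<=` B -> Zt n A (B `\` B') = Zt n A B - Zt n A B'.
Proof.
move=> mA mB mB' sub; rewrite /Zt -RintegralB //; try exact: Zt_int.
by apply: eq_Rintegral => t _; rewrite xsecD //; ring.
Qed.

Lemma Zt_ge0 n (A B : set MO) : 0 <= Zt n A B.
Proof. by apply: Rintegral_ge0 => t _; apply: mulr_ge0; exact: PO_ge0. Qed.

Lemma Zt_le n (A B : set MO) : measurable A -> measurable B -> Zt n A B <= PB B.
Proof.
move=> mA mB; rewrite PB_int // -(comp_int (iter_mp n) (secf_meas mB)); last first.
  by move=> t; exact: PO_ge0.
apply: le_Rintegral => //; first exact: Zt_int.
  apply: int_bd1; first exact: secI_meas.
  by move=> t; exact: normPO_le1 (measurable_xsection _ _).
move=> t _; rewrite ler_piMl ?PO_ge0 // PO_le1 //; exact: measurable_xsection.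
Qed.

Lemma yD_B n (A B B' : set MO) : measurable A -> measurable B -> measurable B' ->
  B' `<=` B -> ydev n A (B `\` B') = ydev n A B - ydev n A B'.
Proof.
move=> mA mB mB' sub; rewrite /ydev preD fineQD //; try exact: preI_meas.
  by rewrite (ZD n mA mB mB' sub); ring.
by move=> x [Ax Bx]; split => //; exact: sub.
Qed.

Lemma ybound_B n (A B : set MO) : measurable A -> measurable B ->
  `|ydev n A B| <= 1 * PB B.
Proof.
move=> mA mB; rewrite mul1r.
have h1 : PB (A `&` Sn n @^-1` B) <= PB B.
  rewrite -(PB_pres n mB); apply: fineQ_le; [exact: Sn_pre_meas| |exact: preI_meas].
  by move=> x [].
have h2 := Zt_le n mA mB; have h3 := Zt_ge0 n A B.
by rewrite /ydev; apply: norm_sub_le; rewrite ?h1 ?h2 ?h3 ?PB_ge0.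
Qed.

Definition edev n (A : set MO) (D : set Omega) t :=
  PO (xsection A t `&` theta (kn n t) @^-1` D) - PO (xsection A t) * PO D.

Lemma secT (D : set Omega) (s : M) : xsection (setT `*` D) s = D.
Proof. by rewrite in_xsectionX // inE. Qed.

Lemma sec_eq n (A : set MO) (D : set Omega) t :
  xsection A t `&` theta (kn n t) @^-1` D =
  xsection (A `&` Sn n @^-1` (setT `*` D)) t.
Proof. by rewrite sec_S secT. Qed.

Lemma sec1_meas n (A : set MO) (D : set Omega) : measurable A -> measurable D ->
  measurable_fun setT (fun t => PO (xsection A t `&` theta (kn n t) @^-1` D)).
Proof.
move=> mA mD; under eq_fun do rewrite sec_eq.
apply: secf_meas; apply: preI_meas => //; exact: measurableX.
Qed.

Lemma edev_meas n (A : set MO) (D : set Omega) : measurable A -> measurable D ->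
  measurable_fun setT (edev n A D).
Proof.
move=> mA mD; apply: measurable_funB; first exact: sec1_meas.
by apply: measurable_funM => //; exact: secf_meas.
Qed.

Lemma edev_le1 n (A : set MO) (D : set Omega) t : measurable A -> measurable D ->
  `|edev n A D t| <= 1.
Proof.
move=> mA mD; have mAt := measurable_xsection t mA.
have mI : measurable (xsection A t `&` theta (kn n t) @^-1` D).
  by rewrite sec_eq; apply: measurable_xsection; apply: preI_meas => //; exact: measurableX.
have h1 := PO_le1 mI; have h2 := PO_ge0 (xsection A t `&` theta (kn n t) @^-1` D).
have h3 : PO (xsection A t) * PO D <= 1.
  by rewrite -[1]mulr1; apply: ler_pM; rewrite ?PO_ge0 ?PO_le1.
have h4 : 0 <= PO (xsection A t) * PO D by apply: mulr_ge0; exact: PO_ge0.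
by rewrite /edev; apply: norm_sub_le; rewrite ?h1 ?h2 ?h3 ?h4.
Qed.

Lemma ind_meas n (C : set M) : measurable C ->
  measurable_fun setT (fun t => (\1_C (iter n tau t) : R)).
Proof.
move=> mC; change (measurable_fun setT ((\1_C : M -> R) \o iter n tau)).
by apply: measurableT_comp; [exact: measurable_indic|exact: iter_meas].
Qed.

Lemma ind_le1 (C : set M) s : `|(\1_C s : R)| <= 1.
Proof. by rewrite indicE; case: (s \in C); rewrite ?normr1 ?normr0. Qed.

Lemma PBrect n (A : set MO) (C : set M) (D : set Omega) :
  measurable A -> measurable C -> measurable D ->
  PB (A `&` Sn n @^-1` (C `*` D)) =
  \int[mu]_t (\1_C (iter n tau t) * PO (xsection A t `&` theta (kn n t) @^-1` D)).
Proof.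
move=> mA mC mD; rewrite PB_int; last by apply: preI_meas => //; exact: measurableX.
apply: eq_Rintegral => t _; rewrite sec_S indicE.
case: (boolP (iter n tau t \in C)) => h.
  by rewrite in_xsectionX // mul1r.
by rewrite notin_xsectionX // preimage_set0 setI0 measure0 mul0r.
Qed.

Lemma Ztrect n (A : set MO) (C : set M) (D : set Omega) :
  measurable A -> measurable C -> measurable D ->
  Zt n A (C `*` D) = \int[mu]_t (\1_C (iter n tau t) * (PO (xsection A t) * PO D)).
Proof.
move=> mA mC mD; apply: eq_Rintegral => t _; rewrite indicE.
case: (boolP (iter n tau t \in C)) => h.
  by rewrite in_xsectionX // mul1r.
by rewrite notin_xsectionX // measure0 mul0r mulr0.
Qed.

Lemma yrect n (A : set MO) (C : set M) (D : set Omega) :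
  measurable A -> measurable C -> measurable D ->
  ydev n A (C `*` D) = \int[mu]_t (\1_C (iter n tau t) * edev n A D t).
Proof.
move=> mA mC mD; rewrite /ydev PBrect // Ztrect // -RintegralB //.
- by apply: eq_Rintegral => t _; rewrite /edev mulrBr.
- apply: int_bd1; first by apply: measurable_funM; [exact: ind_meas|exact: sec1_meas].
  move=> t; rewrite normrM -[1]mulr1; apply: ler_pM => //; first exact: ind_le1.
  by rewrite sec_eq; apply: normPO_le1; apply: measurable_xsection;
    apply: preI_meas => //; exact: measurableX.
- apply: int_bd1.
    apply: measurable_funM; first exact: ind_meas.
    by apply: measurable_funM => //; exact: secf_meas.
  move=> t; rewrite normrM -[1]mulr1; apply: ler_pM => //; first exact: ind_le1.
  rewrite normrM -[1]mulr1; apply: ler_pM => //; last exact: normPO_le1.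
  exact: normPO_le1 (measurable_xsection _ _).
Qed.

Lemma ybound_rect n (A : set MO) (C : set M) (D : set Omega) :
  measurable A -> measurable C -> measurable D ->
  `|ydev n A (C `*` D)| <= \int[mu]_t `|edev n A D t|.
Proof.
move=> mA mC mD; rewrite yrect //.
have ie : mu.-integrable setT (EFin \o edev n A D).
  apply: int_bd1; [exact: edev_meas|by move=> t; exact: edev_le1].
have i1 : mu.-integrable setT (EFin \o (fun t => \1_C (iter n tau t) * edev n A D t)).
  apply: int_bd1; first by apply: measurable_funM; [exact: ind_meas|exact: edev_meas].
  move=> t; rewrite normrM -[1]mulr1; apply: ler_pM => //; first exact: ind_le1.
  exact: edev_le1.
apply: le_trans (le_normr_Rintegral _ _) _ => //.
apply: le_Rintegral => //.
- exact: integrable_norm.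
- exact: integrable_norm.
- move=> t _; rewrite normrM -[leRHS]mul1r; apply: ler_wpM2r => //.
  exact: ind_le1.
Qed.

Lemma secX1 (C1 : set M) (D1 : set Omega) t : measurable D1 ->
  PO (xsection (C1 `*` D1) t) = \1_C1 t * PO D1.
Proof.
move=> mD1; rewrite indicE; case: (boolP (t \in C1)) => h.
  by rewrite in_xsectionX // mul1r.
by rewrite notin_xsectionX // measure0 mul0r.
Qed.

Lemma PBX (C1 : set M) (D1 : set Omega) : measurable C1 -> measurable D1 ->
  PB (C1 `*` D1) = PM C1 * PO D1.
Proof.
move=> mC1 mD1; rewrite product_measure1E // fineM //; exact: finQ.
Qed.

Lemma Rint_indic (E : set M) : measurable E -> \int[mu]_t (\1_E t : R) = PM E.
Proof. by move=> mE; rewrite /Rintegral integral_indic // setIT. Qed.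

Lemma Zt_rect2 n (C1 : set M) (D1 : set Omega) (C : set M) (D : set Omega) :
  measurable C1 -> measurable D1 -> measurable C -> measurable D ->
  Zt n (C1 `*` D1) (C `*` D) = PO D1 * PO D * PM (C1 `&` iter n tau @^-1` C).
Proof.
move=> mC1 mD1 mC mD; have mI : measurable (C1 `&` iter n tau @^-1` C).
  by apply: measurableI => //; exact: pre_meas (iter_meas n) mC.
rewrite -Rint_indic // -RintegralZl //; last first.
  by apply: int_bd1; [exact: measurable_indic|move=> t; exact: ind_le1].
apply: eq_Rintegral => t _; rewrite !secX1 // indicI /=.
have -> : (\1_(iter n tau @^-1` C) t : R) = \1_C (iter n tau t) by rewrite !indicE.
ring.
Qed.

Lemma xrect n (C1 : set M) (D1 : set Omega) (C : set M) (D : set Omega) :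
  measurable C1 -> measurable D1 -> measurable C -> measurable D ->
  xdev n (C1 `*` D1) (C `*` D) = ydev n (C1 `*` D1) (C `*` D) +
    PO D1 * PO D * (PM (C1 `&` iter n tau @^-1` C) - PM C1 * PM C).
Proof.
move=> mC1 mD1 mC mD; rewrite /xdev /ydev Zt_rect2 // !PBX //; ring.
Qed.

Lemma Rint_sum m (f : nat -> M -> R) : (forall i, mu.-integrable setT (EFin \o f i)) ->
  mu.-integrable setT (EFin \o (fun t => \sum_(i < m) f i t)) /\
  \int[mu]_t (\sum_(i < m) f i t) = \sum_(i < m) \int[mu]_t f i t.
Proof.
move=> hf; elim: m => [|m [IHi IHe]].
  have e0 : (fun t => \sum_(i < 0) f i t) = fun=> 0 by apply/funext => t; rewrite big_ord0.
  rewrite e0 big_ord0 Rintegral_cst // mul0r; split => //.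
  exact: (finite_measure_integrable_cst mu 0 measurableT).
have eS : (fun t => \sum_(i < m.+1) f i t) = fun t => \sum_(i < m) f i t + f m t.
  by apply/funext => t; rewrite big_ord_recr.
rewrite eS big_ord_recr /= RintegralD // IHe; split => //.
have -> : EFin \o (fun t => \sum_(i < m) f i t + f m t) =
  ((EFin \o (fun t => (\sum_(i < m) f i t)%R)) \+ (EFin \o f m))%E by apply/funext.
exact: integrableD.
Qed.

Lemma Phi_e w (hw : good_w w)
  (HE : {ae mu, forall t, forall F D : set Omega, measurable F -> measurable D ->
     Phi w (fun n => PO (F `&` theta (kn n t) @^-1` D) - PO F * PO D)})
  (A : set MO) (D : set Omega) : measurable A -> measurable D ->
  Phi w (fun n => \int[mu]_t `|edev n A D t|).
Proof.
move=> mA mD.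
pose h n t := wavg w (fun i => `|edev i A D t|) n.
have mabs i : measurable_fun setT (fun t => `|edev i A D t|).
  change (measurable_fun setT ((@Num.norm _ R) \o edev i A D)).
  by apply: measurableT_comp; [exact: normr_measurable|exact: edev_meas].
have iabs i : mu.-integrable setT (EFin \o (fun t => `|edev i A D t|)).
  by apply: int_bd1 => // t; rewrite normr_id; exact: edev_le1.
have hm n : measurable_fun setT (h n).
  by apply: measurable_sum => i; apply: measurable_funM.
have hb n t : 0 <= h n t <= 1.
  apply/andP; split; first by apply: wavg_ge0 => // i.
  apply: le_trans (wavg_cst hw n ler01); apply: wavg_le => // i.
  exact: edev_le1.
have hint n : mu.-integrable setT (EFin \o h n).
  apply: int_bd1 => // t; have /andP[h0 h1] := hb n t; by rewrite ger0_norm.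
have hsum n : wavg w (fun i => `| \int[mu]_t `|edev i A D t| |) n = \int[mu]_t h n t.
  have HI i : mu.-integrable setT (EFin \o (fun t => w n i * `|edev i A D t|)).
    apply: (int_bd (c := w n i)); first by apply: measurable_funM.
    move=> t; rewrite normrM normr_id ger0_norm; last exact: hw.1.
    by rewrite ler_piMr ?hw.1 // edev_le1.
  rewrite /h /wavg (Rint_sum n.+1 HI).2.
  apply: eq_bigr => i _; rewrite RintegralZl // ger0_norm //.
  by apply: Rintegral_ge0 => t _.
have cv : (fun n => \int[mu]_t h n t) @ \oo --> 0.
  have mh n : measurable_fun setT (EFin \o h n) by exact/measurable_EFinP.
  have ff : {ae mu, forall t, setT t -> (fun n => (EFin \o h n) t) @ \oo --> cst 0%E t}.
    apply: filterS HE => t Ht _.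
    apply/fine_cvgP; split; first by near=> n.
    apply/cvg0P => e e0.
    have := Ht (xsection A t) D (measurable_xsection _ mA) mD e e0.
    move=> [N HN]; exists N => n /HN he /=.
    by rewrite ger0_norm //; have /andP[] := hb n t.
  have fg : {ae mu, forall t n, setT t -> (`|(EFin \o h n) t| <= cst 1%E t)%E}.
    by apply: aeW => t n _ /=; rewrite lee_fin ger0_norm; have /andP[] := hb n t.
  have [_ _] := dominated_convergence (mu := mu) measurableT mh (measurable_cst _) ff
    (finite_measure_integrable_cst mu 1 measurableT) fg.
  rewrite integral0 => dc; have := fine_cvg dc; exact.
move=> e e0; have /cvg0P /(_ e e0) [N HN] := cv.
exists N => n /HN; rewrite hsum; apply: le_trans; exact: ler_norm.
Unshelve. all: by end_near.
Qed.

Definition HEt (w : nat -> nat -> R) :=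
  {ae mu, forall t, forall F D : set Omega, measurable F -> measurable D ->
     Phi w (fun n => PO (F `&` theta (kn n t) @^-1` D) - PO F * PO D)}.

Lemma Phi_x_rect w (hw : good_w w) (HE : HEt w)
  (Hmu : forall C1 C : set M, measurable C1 -> measurable C ->
     Phi w (fun n => PM (C1 `&` iter n tau @^-1` C) - PM C1 * PM C))
  (C1 : set M) (D1 : set Omega) (C : set M) (D : set Omega) :
  measurable C1 -> measurable D1 -> measurable C -> measurable D ->
  Phi w (fun n => xdev n (C1 `*` D1) (C `*` D)).
Proof.
move=> mC1 mD1 mC mD.
have mA : measurable (C1 `*` D1) by exact: measurableX.
have hs := Phi_sum (Phi_e hw HE mA mD) (Hmu C1 C mC1 mC).
apply: (Phi_le hw _ hs) => n; rewrite xrect //.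
rewrite [X in _ <= X]ger0_norm ?addr_ge0 //.
apply: le_trans (ler_normD _ _) _; apply: lerD.
  by apply: le_trans (ybound_rect n mA mC mD) (ler_norm _).
rewrite normrM -[X in _ <= X]mul1r; apply: ler_wpM2r => //.
rewrite normrM -[1]mulr1; apply: ler_pM => //; exact: normPO_le1.
Qed.

Lemma Phi_x_all w (hw : good_w w) (HE : HEt w)
  (Hmu : forall C1 C : set M, measurable C1 -> measurable C ->
     Phi w (fun n => PM (C1 `&` iter n tau @^-1` C) - PM C1 * PM C))
  (A B : set MO) : measurable A -> measurable B -> Phi w (fun n => xdev n A B).
Proof.
have step1 (C1 : set M) (D1 : set Omega) : measurable C1 -> measurable D1 ->
    forall B, measurable B -> Phi w (fun n => xdev n (C1 `*` D1) B).
  move=> mC1 mD1 B0 mB0.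
  have mA : measurable (C1 `*` D1) by exact: measurableX.
  apply: (@lambda_Phi _ _ _ _ _ (mu \x P)%E w hw (fun B n => xdev n (C1 `*` D1) B) 1) => //.
  - by move=> E mE n; exact: xbound_B.
  - by move=> E F mE mF FE n; exact: xD_B.
  - by move=> C D mC mD; exact: Phi_x_rect.
move=> mA mB.
apply: (@lambda_Phi _ _ _ _ _ (mu \x P)%E w hw (fun A n => xdev n A B) 1) => //.
- by move=> E mE n; exact: xbound_A.
- by move=> E F mE mF FE n; exact: xD_A.
- by move=> C D mC mD; exact: step1.
Qed.

Lemma Phi_y_all w (hw : good_w w) (HE : HEt w) (A B : set MO) :
  measurable A -> measurable B -> Phi w (fun n => ydev n A B).
Proof.
move=> mA mB.
apply: (@lambda_Phi _ _ _ _ _ (mu \x P)%E w hw (fun B n => ydev n A B) 1) => //.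
- by move=> E mE n; exact: ybound_B.
- by move=> E F mE mF FE n; exact: yD_B.
- move=> C D mC mD; apply: (Phi_le hw _ (Phi_e hw HE mA mD)) => n.
  by apply: le_trans (ybound_rect n mA mC mD) (ler_norm _).
Qed.

Lemma Phi_ces_const (c : R) : Phi (wces R) (fun=> c) -> c = 0.
Proof.
move=> h; apply/eqP; rewrite -normr_le0; apply/ler_addgt0Pr => e e0; rewrite add0r.
have [N HN] := h e e0; have := HN N.+1 (leqnSn N).
by rewrite wavg_ces sumr_const card_ord -[`|c| *+ _]mulr_natl mulrA mulVf ?mul1r // pnatr_eq0.
Qed.

Lemma part1 (HE : HEt (wces R)) (herg : ergodic mu tau) :
  ergodic (mu \x P)%E (skew_product tau kappa theta).
Proof.
move=> A mA hA.
have Ainv n : Sn n @^-1` A = A.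
  elim: n => [|n IH]; first by rewrite -iterSk.
  have -> : Sn n.+1 @^-1` A = Sn n @^-1` (skew_product tau kappa theta @^-1` A).
    by rewrite -!iterSk.
  by rewrite hA.
pose a t := PO (xsection A t).
have ma : measurable_fun setT a := secf_meas mA.
have a01 t : 0 <= a t <= 1.
  by rewrite PO_ge0 PO_le1 //; exact: measurable_xsection.
have ainv t : a (tau t) = a t.
  have h1 := congr1 (fun E => PO (xsection E t)) (Ainv 1).
  have mx : measurable (xsection A (iter 1 tau t)) by exact: measurable_xsection.
  by rewrite /= secS th_pres // in h1.
have ainvn : forall n t, a (iter n tau t) = a t.
  by elim => //= n IH t; rewrite ainv IH.
have yA n : ydev n A A = PB A - \int[mu]_t (a t * a t).
  rewrite /ydev Ainv setIid; congr (_ - _); apply: eq_Rintegral => t _.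
  by change (a t * a (iter n tau t) = a t * a t); rewrite ainvn.
have c0 : PB A - \int[mu]_t (a t * a t) = 0.
  apply: Phi_ces_const; have := Phi_y_all (good_wces R) HE mA mA.
  have -> // : (fun n => ydev n A A) = fun=> (PB A - \int[mu]_t (a t * a t)).
  by apply/funext => n; exact: yA.
have ia : mu.-integrable setT (EFin \o a).
  by apply: int_bd1 => // t; have /andP[h0 h1] := a01 t; rewrite ger0_norm.
have maa : measurable_fun setT (fun t => a t * a t) by exact: measurable_funM.
have iaa : mu.-integrable setT (EFin \o (fun t => a t * a t)).
  apply: int_bd1 => // t; have /andP[h0 h1] := a01 t.
  by rewrite normrM ger0_norm // -[1]mulr1; apply: ler_pM.
pose g t := a t - a t * a t.
have g01 t : 0 <= g t <= 1.
  have /andP[h0 h1] := a01 t; rewrite /g subr_ge0 ler_piMr //=.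
  by rewrite lerBlDr (le_trans h1) // lerDl mulr_ge0.
have mg : measurable_fun setT g by exact: measurable_funB.
have ig : mu.-integrable setT (EFin \o g).
  by apply: int_bd1 => // t; have /andP[h0 h1] := g01 t; rewrite ger0_norm.
have PBa : PB A = \int[mu]_t a t by exact: PB_int.
have intg : \int[mu]_t g t = 0.
  by rewrite /g RintegralB // -PBa.
have gE : (\int[mu]_t (g t)%:E = 0)%E.
  rewrite -(@fineK _ (\int[mu]_t (g t)%:E)%E) ?(integrable_fin_num _ ig) //.
  by congr (_%:E); exact: intg.
have ae0 : ae_eq mu setT (EFin \o g) (cst 0%E).
  apply/(ae_eq_integral_abs mu measurableT); first exact/measurable_EFinP.
  rewrite -gE; apply: eq_integral => t _.
  by rewrite /= ger0_norm //; have /andP[] := g01 t.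
have [N [mN N0 subN]] := ae0.
pose E := [set t | 0 < a t].
have mE : measurable E.
  have -> : E = a @^-1` `]0, +oo[ by apply/seteqP; split => t /=; rewrite in_itv /= andbT.
  by rewrite -[X in measurable X]setTI; apply: ma => //; exact: measurable_itv.
have hE : tau @^-1` E = E.
  apply/seteqP; split => t.
    by change (0 < a (tau t) -> 0 < a t); rewrite ainv.
  by change (0 < a t -> 0 < a (tau t)); rewrite ainv.
have PBle : PB A <= 1 by exact: PB_le1.
have PBge : 0 <= PB A by exact: PB_ge0.
have i1 (F : set M) : measurable F -> mu.-integrable setT (EFin \o (\1_F : M -> R)).
  by move=> mF; apply: int_bd1; [exact: measurable_indic|move=> t; exact: ind_le1].
case: (herg E mE hE) => muE; [left|right];
  (apply: (@eq_trans _ _ (PB A)%:E); first by rewrite fineQK); congr (_%:E).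
- apply/eqP; rewrite eq_le PBge andbT PBa.
  have := Rint_indic mE; rewrite muE /= => <-.
  apply: le_Rintegral => //; first exact: i1.
  move=> t _; rewrite indicE; have [Et|nEt] := pselect (E t).
    by rewrite mem_set //; have /andP[] := a01 t.
  by rewrite memNset // leNgt; apply/negP.
- apply/eqP; rewrite eq_le PBle /= PBa.
  have -> : (1 : R) = PM E - PM N by rewrite muE N0 /= subr0.
  rewrite -!Rint_indic // -RintegralB //; try exact: i1.
  apply: le_Rintegral => //.
    apply: (int_bd (c := 2)).
      by apply: measurable_funB; exact: measurable_indic.
    move=> t; apply: le_trans (ler_normB _ _) _.
    by apply: le_trans (lerD (ind_le1 E t) (ind_le1 N t)) _; rewrite (_ : 2 = 1 + 1).
  move=> t _; rewrite !indicE; have /andP[h0 h1] := a01 t.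
  have [Nt|nNt] := pselect (N t).
    by rewrite (mem_set Nt); case: (_ \in E) => /=; lra.
  have gt0 : g t = 0.
    apply/eqP; apply/negPn/negP => /eqP h; apply: nNt; apply: subN => /= H.
    by apply: h; have := H I; case.
  rewrite (memNset nNt) subr0; have [Et|nEt] := pselect (E t).
    rewrite (mem_set Et) /=.
    have : a t * (1 - a t) = 0 by rewrite mulrBr mulr1.
    move/eqP; rewrite mulf_eq0 => /orP[/eqP at0|]; first by move: Et; rewrite /E /= at0 ltxx.
    by rewrite subr_eq0 => /eqP <-.
  by rewrite (memNset nEt).
Qed.

Lemma part2 (HE : HEt (wces R)) (hwm : weakly_mixing mu tau) :
  weakly_mixing (mu \x P)%E (skew_product tau kappa theta).
Proof.
move=> A B mA mB.
have Hmu (C1 C : set M) : measurable C1 -> measurable C ->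
    Phi (wces R) (fun n => PM (C1 `&` iter n tau @^-1` C) - PM C1 * PM C).
  by move=> mC1 mC; apply/Phi_cesP; exact: hwm.
have := Phi_x_all (good_wces R) HE Hmu mA mB; move/Phi_cesP.
have -> : (fun i => iter i (skew_product tau kappa theta)) = Sn.
  by apply/funext => i; exact: iterSk.
by [].
Qed.

Lemma part3 (HE : HEt (wlim R)) (hsm : strongly_mixing mu tau) :
  strongly_mixing (mu \x P)%E (skew_product tau kappa theta).
Proof.
move=> A B mA mB.
have Hmu (C1 C : set M) : measurable C1 -> measurable C ->
    Phi (wlim R) (fun n => PM (C1 `&` iter n tau @^-1` C) - PM C1 * PM C).
  by move=> mC1 mC; apply/Phi_limP; exact: hsm.
have -> : (fun n => fine ((mu \x P)%E (A `&` iter n (skew_product tau kappa theta) @^-1` B)))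
  = (fun n => PB (A `&` Sn n @^-1` B)).
  by apply/funext => n; rewrite iterSk.
have hx := Phi_x_all (good_wlim R) HE Hmu mA mB.
by move/Phi_limP: hx.
Qed.

Lemma HE_C1 : {ae mu, forall t, weakly_mixing_along P theta (fun n => kn n t)} -> HEt (wces R).
Proof. by move=> h; apply: filterS h => t ht F D mF mD; apply/Phi_cesP; exact: ht. Qed.

Lemma HE_C2 (norm : K -> nat) : strongly_mixing_family norm P theta ->
  {ae mu, forall t, forall N : nat, exists n0 : nat, forall n : nat,
     (n0 <= n)%N -> (N <= norm (kn n t))%N} -> HEt (wlim R).
Proof.
move=> hf h; apply: filterS h => t ht F D mF mD e e0.
have [N0 HN0] := hf F D mF mD e e0; have [n0 Hn0] := ht N0.
by exists n0 => n hn; rewrite wavg_lim; apply: ltW; apply: HN0; exact: Hn0.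
Qed.
End skew.

Lemma Kt_countable p d : countable [set: Kt p d].
Proof. by case: p => /=; exact: countableP. Qed.

Theorem lemma2p2 (R : realType) (p : param) (d : nat)
  (dO : measure_display) (Omega : measurableType dO) (P : probability Omega R)
  (theta : Kt p d -> Omega -> Omega)
  (dM : measure_display) (M : measurableType dM) (mu : probability M R)
  (tau : M -> M) (kappa : M -> Kt p d) :
  mp_semigroup P theta ->
  measure_preserving mu tau ->
  measurable_discrete kappa ->
  let Sk := skew_product tau kappa theta in
  let C1 := {ae mu, forall t,
               weakly_mixing_along P theta (fun n => kappa_n tau kappa n t)} in
  let C2 := strongly_mixing_family (@knorm p d) P theta /\
            {ae mu, forall t, forall N : nat, exists n0 : nat, forall n : nat,
               (n0 <= n)%N -> (N <= knorm (kappa_n tau kappa n t))%N} in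
  (C1 -> ergodic mu tau -> ergodic (mu \x P)%E Sk) /\
  (C1 -> weakly_mixing mu tau -> weakly_mixing (mu \x P)%E Sk) /\
  (C2 -> strongly_mixing mu tau -> strongly_mixing (mu \x P)%E Sk).
Proof.
move=> hth htau hka Sk C1 C2.
have hK := Kt_countable p d.
split; [|split].
- move=> c1 herg; exact: (part1 hK hth htau hka (HE_C1 c1) herg).
- move=> c1 hwm; exact: (part2 hK hth htau hka (HE_C1 c1) hwm).
- move=> [c2a c2b] hsm; exact: (part3 hK hth htau hka (HE_C2 c2a c2b) hsm).
Qed.
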